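(* For every integer $N\ge 1$, the total area of all ternary paths of length $3N$ equals $$\sum_{k=0}^{N-1}3^{k+1}\binom{3N-k}{N-1-k}.$$
   Context: A ternary path of length $3N$ is a lattice path $(0,c_0),(1,c_1),\dots,(3N,c_{3N})$ with $c_0=c_{3N}=0$, steps $(1,1)$ or $(1,-2)$, and all $c_j\ge 0$. Its area is $c_0+c_1+\cdots+c_{3N}$. The total area is the sum of the areas over all such paths of length $3N$. *)

(* Defs.v *)
From mathcomp Require Import all_boot all_order all_algebra.
Set Implicit Arguments. Unset Strict Implicit. Unset Printing Implicit Defensive.
Import GRing.Theory Num.Theory.

(* A path of length n is encoded by its step sequence s (size n):
   true = step (1,1), false = step (1,-2). *)
Definition step_val (b : bool) : int := if b then 1%R else (- 2%:R)%R.

Definition height (s : seq bool) (j : nat) : int :=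
  (\sum_(b <- take j s) step_val b)%R.

Definition is_ternary_path (s : seq bool) : bool :=
  [forall j : 'I_(size s).+1, (0 <= height s j)%R] && (height s (size s) == 0%R).

Definition area (s : seq bool) : int := (\sum_(j < (size s).+1) height s j)%R.

Definition total_area (n : nat) : int :=
  (\sum_(t : n.-tuple bool | is_ternary_path t) area t)%R.

(* Main.v *)
Require Import Defs.
From mathcomp Require Import all_boot all_order all_algebra.
From mathcomp Require Import ring lra zify.
Import GRing.Theory Num.Theory.
Local Open Scope ring_scope.

Definition bb (m r : nat) : int := ('C(3 * m + r, m))%:R.
Definition bbm (m r : nat) : int := if m is m'.+1 then bb m' r else 0.
Fixpoint f (m r : nat) : int :=
  match m with 0 => 1 | m'.+1 => bb m'.+1 r + 3 * f m' r.+2 end.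
Definition fm (m r : nat) : int := if m is m'.+1 then f m' r else 0.
Definition p (m r : nat) : int := bb m r - 3 * bbm m r.+2.
Definition C2 (h : nat) : int := ('C(h.+1, 2))%:R.
Definition Wf (m h : nat) : int :=
  3 * h.+1%:R * fm m h.+3 + 3 * C2 h * bbm m h.+3 + C2 h * p m h.+1.

Lemma bb0 r : bb 0 r = 1. Proof. by rewrite /bb bin0. Qed.

Lemma bbF m r : bb m r.+1 = bb m r + bbm m r.+3.
Proof.
case: m => [|m]; first by rewrite !bb0 /= addr0.
rewrite /bbm /bb.
have -> : (3 * m.+1 + r.+1 = (3 * m.+1 + r).+1)%N by lia.
rewrite binS natrD; congr (_ + _%:R); congr 'C(_,_); lia.
Qed.

Lemma fE m r : f m r = bb m r + 3 * fm m r.+2.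
Proof. by case: m => [|m] /=; rewrite ?bb0 ?mulr0 ?addr0. Qed.

Lemma f3 m r : 3 * f m r - 2 * f m r.+1 = bb m r.+1.
Proof.
elim: m r => [|m IH] r /=; first by rewrite !bb0.
have := IH r.+2. have := bbF m.+1 r. rewrite /bbm => H1 H2.
rewrite H1. rewrite -H2. ring.
Qed.

Lemma fF m r : f m r.+1 = f m r + fm m r.+3.
Proof.
case: m => [|m] /=; first by rewrite addr0.
have := f3 m r.+2. have := bbF m.+1 r. rewrite /bbm => H1 H2.
rewrite H1 -H2. ring.
Qed.

Lemma fm3 m r : 3 * fm m r - 2 * fm m r.+1 = bbm m r.+1.
Proof. case: m => [|m] /=; [by rewrite !mulr0 subr0 | exact: f3]. Qed.

Lemma pF m r : p m r.+1 = p m r + (if m is M.+1 then p M r.+3 else 0).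
Proof.
case: m => [|m]; rewrite /p /=; first by rewrite !bb0 !mulr0.
rewrite bbF /= !(bbF m r.+2). ring.
Qed.

Lemma p0 m : p m.+1 0 = 0.
Proof.
rewrite /p /= /bb addn0.
have H := mul_bin_diag (3 * m.+1) m.
have E : ((3 * m.+1).-1 = 3 * m + 2)%N by lia.
rewrite E in H.
have -> : (('C(3 * m.+1, m.+1)) = 3 * 'C(3 * m + 2, m))%N.
  apply/eqP; rewrite -(eqn_pmul2l (ltn0Sn m)) -H; apply/eqP; lia.
rewrite natrM; ring.
Qed.

Lemma P0 m : p m.+1 1 = p m 3.
Proof. by rewrite pF p0 add0r. Qed.

Lemma C2S h : C2 h.+1 = C2 h + h.+1%:R.
Proof. by rewrite /C2 binS bin1 natrD. Qed.

Lemma W0 m : Wf m.+1 0 = Wf m 2.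
Proof.
rewrite /Wf /C2 /= /p /=.
rewrite (fE m 3).
have := fm3 m 4. move=> H.
rewrite (_ : ('C(1,2) = 0)%N) // (_ : ('C(3,2) = 3)%N) //. ring.
Qed.

Lemma W1 m h : Wf m h.+1 = Wf m h + (if m is M.+1 then Wf M h.+3 else 0)
  + h.+1%:R * p m h.+2.
Proof.
case: m => [|M].
  rewrite /Wf /p /= !bb0 !C2S. ring.
rewrite /Wf /p /=.
rewrite (bbF M.+1 h.+1) /=.
rewrite (fF M h.+3) (fE M h.+3) (bbF M h.+3) -(fm3 M (h.+4).+1) !C2S.
ring.
Qed.
Fixpoint allb (n : nat) : seq (seq bool) :=
  if n is n'.+1 then [seq rcons s b | s <- allb n', b <- [:: true; false]]
  else [:: [::]].

Lemma allbS n : allb n.+1 = [seq rcons s b | s <- allb n, b <- [:: true; false]].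
Proof. by []. Qed.

Lemma mem_allb n s : (s \in allb n) = (size s == n).
Proof.
elim: n s => [|n IH] s.
  by rewrite /= inE; case: s.
rewrite allbS.
apply/allpairsP/idP => [[[s' b] /= [H1 _ ->]]|].
  by rewrite size_rcons eqSS -IH.
case/lastP: s => [//|s' b]; rewrite size_rcons eqSS -IH => H.
by exists (s', b); rewrite /= H; case: b.
Qed.

Lemma uniq_allb n : uniq (allb n).
Proof.
elim: n => [//|n IH].
rewrite allbS; apply: allpairs_uniq => //.
move=> [s1 b1] [s2 b2] _ _ /= E.
exact: rcons_inj E.
Qed.

Lemma tuple_allb n (F : seq bool -> int) (P : pred (seq bool)) :
  \sum_(t : n.-tuple bool | P t) F t = \sum_(s <- allb n | P s) F s.
Proof.
have -> : \sum_(t : n.-tuple bool | P t) F t =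
          \sum_(s <- map val (enum {: n.-tuple bool}) | P s) F s.
  by rewrite big_map big_enum_cond.
apply: perm_big; apply: uniq_perm.
- by rewrite map_inj_uniq ?enum_uniq //; exact: val_inj.
- exact: uniq_allb.
move=> s; rewrite mem_allb; apply/mapP/idP => [[t _ ->]|H].
  by rewrite size_tuple.
by exists (Tuple H); rewrite ?mem_enum.
Qed.

Lemma sum_allbS n (F : seq bool -> int) :
  \sum_(s <- allb n.+1) F s =
  \sum_(s <- allb n) (F (rcons s true) + F (rcons s false)).
Proof.
rewrite allbS big_allpairs_dep; apply: eq_bigr => s _.
by rewrite !big_cons big_nil /= addr0.
Qed.

Definition okr (s : seq bool) : bool :=
  all (fun j => 0 <= height s j) (iota 0 (size s).+1).

Lemma okrE s : [forall j : 'I_(size s).+1, 0 <= height s j] = okr s.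
Proof.
apply/forallP/allP => [H j|H j].
  by rewrite mem_iota add0n => Hj; exact: (H (Ordinal Hj)).
by apply: H; rewrite mem_iota add0n ltn_ord.
Qed.

Definition hend (s : seq bool) : int := height s (size s).

Lemma height_rcons_le s b j : (j <= size s)%N -> height (rcons s b) j = height s j.
Proof. by move=> Hj; rewrite /height -cats1 takel_cat. Qed.

Lemma hend_rcons s b : hend (rcons s b) = hend s + step_val b.
Proof.
by rewrite /hend /height !take_size big_rcons.
Qed.

Lemma okr_rcons s b : okr (rcons s b) = okr s && (0 <= hend s + step_val b).
Proof.
rewrite /okr size_rcons.
have -> : iota 0 (size s).+2 = iota 0 (size s).+1 ++ [:: (size s).+1].
  by rewrite -(addn1 (size s).+1) iotaD.
have E : all (fun j => 0 <= height (rcons s b) j) (iota 0 (size s).+1) =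
         all (fun j => 0 <= height s j) (iota 0 (size s).+1).
  apply: eq_in_all => j; rewrite mem_iota add0n ltnS => Hj.
  by rewrite height_rcons_le.
rewrite all_cat E; congr (_ && _).
by rewrite -hend_rcons /= andbT /hend size_rcons.
Qed.

Lemma area_rcons s b : area (rcons s b) = area s + hend (rcons s b).
Proof.
rewrite /area size_rcons big_ord_recr /=; congr (_ + _).
by apply: eq_bigr => j _; rewrite height_rcons_le // -ltnS.
by rewrite /hend size_rcons.
Qed.

Lemma okr_hend s : okr s -> 0 <= hend s.
Proof. move/allP => H; apply: (H (size s)); by rewrite mem_iota add0n ltnSn. Qed.

Lemma hend_le s : hend s <= (size s)%:R.
Proof.
rewrite /hend /height take_size.
elim: s => [|b s IH]; first by rewrite big_nil.
rewrite big_cons /= -addn1 natrD addrC lerD //.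
by case: b; rewrite /step_val //.
Qed.

Definition cnd (h : nat) (s : seq bool) := okr s && (hend s == h%:R).

Definition Pn n h : int := \sum_(s <- allb n | cnd h s) 1.
Definition Wn n h : int := \sum_(s <- allb n | cnd h s) area s.

Lemma cnd_true h s : cnd h (rcons s true) = (if h is h'.+1 then cnd h' s else false).
Proof.
rewrite /cnd okr_rcons hend_rcons /step_val.
case: (boolP (okr s)) => [Ho|_]; last by case: h.
have H := okr_hend s Ho; rewrite /=.
case: h => [|h]; apply/idP/idP; lia.
Qed.

Lemma cnd_false h s : cnd h (rcons s false) = cnd h.+2 s.
Proof.
rewrite /cnd okr_rcons hend_rcons /step_val.
case: (boolP (okr s)) => [Ho|_]; last by case: h.
have H := okr_hend s Ho; rewrite /=.
apply/idP/idP; lia.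
Qed.

Lemma Sg_rec n h (F : seq bool -> int) :
  \sum_(s <- allb n.+1 | cnd h s) F s =
  (if h is h'.+1 then \sum_(s <- allb n | cnd h' s) F (rcons s true) else 0)
  + \sum_(s <- allb n | cnd h.+2 s) F (rcons s false).
Proof.
rewrite big_mkcond sum_allbS.
under eq_bigr => s _ do rewrite cnd_true cnd_false.
rewrite big_split /=; congr (_ + _); last by rewrite -big_mkcond.
case: h => [|h]; first by rewrite big1.
by rewrite -big_mkcond.
Qed.

Lemma Pn_rec n h : Pn n.+1 h = (if h is h'.+1 then Pn n h' else 0) + Pn n h.+2.
Proof. by rewrite /Pn Sg_rec; case: h. Qed.

Lemma sum_cnd_area n h b :
  \sum_(s <- allb n | cnd h s) area (rcons s b) =
  Wn n h + (h%:R + step_val b) * Pn n h.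
Proof.
rewrite /Wn /Pn big_distrr /= -big_split /=.
apply: eq_bigr => s /andP [_ /eqP H].
by rewrite area_rcons hend_rcons H mulr1.
Qed.

Lemma Wn_rec n h : Wn n.+1 h =
  (if h is h'.+1 then Wn n h' else 0) + Wn n h.+2 + h%:R * Pn n.+1 h.
Proof.
rewrite {1}/Wn Sg_rec Pn_rec.
case: h => [|h]; rewrite !sum_cnd_area /step_val.
  rewrite !add0r subrr !mul0r addr0. done.
ring.
Qed.

Lemma zero_big n h (F : seq bool -> int) : (n < h)%N ->
  \sum_(s <- allb n | cnd h s) F s = 0.
Proof.
move=> Hnh; rewrite big_seq_cond big1 // => s /andP [].
rewrite mem_allb => /eqP Hs /andP [_ /eqP He].
have := hend_le s; rewrite He Hs ler_nat; lia.
Qed.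

Lemma cnd0_nil : cnd 0 [::].
Proof. by rewrite /cnd /okr /hend /height /= big_nil. Qed.

Lemma main_ind n : forall m h, n = (3 * m + h)%N ->
  Pn n h = p m h.+1 /\ Wn n h = Wf m h.
Proof.
elim: n => [|n IH] m h E.
  have [-> ->] : m = 0%N /\ h = 0%N by lia.
  rewrite /Pn /Wn /= !big_cons !big_nil cnd0_nil /p /Wf /= bb0.
  rewrite /area big_ord_recr big_ord0 /= /height /= big_nil /C2.
  rewrite (_ : ('C(1,2) = 0)%N) //; split; ring.
case: h E => [|h] E.
  case: m E => [|M] E; first by lia.
  have [IP IW] := IH M 2%N ltac:(lia).
  rewrite Pn_rec Wn_rec IP IW P0 W0; split; ring.
have [IP IW] := IH m h ltac:(lia).
have [JP JW] : Pn n h.+3 = (if m is M.+1 then p M h.+4 else 0) /\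
               Wn n h.+3 = (if m is M.+1 then Wf M h.+3 else 0).
  case: m E {IP IW} => [|M] E.
    by rewrite /Pn /Wn !zero_big //; lia.
  apply: IH; lia.
have HP : Pn n.+1 h.+1 = p m h.+2.
  by rewrite Pn_rec IP JP (pF m h.+1).
split => //.
rewrite Wn_rec HP IW JW W1; ring.
Qed.

Lemma fsum m r :
  f m r = (\sum_(k < m.+1) 3 ^ k * 'C(3 * m + r - k, m - k))%N%:R.
Proof.
elim: m r => [|m IH] r.
  by rewrite big_ord_recl big_ord0 /= subn0 bin0.
rewrite /= IH /bb -natrM -natrD; congr (_%:R).
rewrite [RHS]big_ord_recl expn0 mul1n !subn0; congr (_ + _).
rewrite big_distrr /=; apply: eq_bigr => i _.
rewrite expnS mulnA; congr (_ * 'C(_, _)); rewrite /bump /=; lia.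
Qed.

Theorem mainTheorem3 (N : nat) (hN : (1 <= N)%N) :
  total_area (3 * N) = (
  ((\sum_(k < N) 3 ^ k.+1 * 'C(3 * N - k, N - 1 - k))%N)%:R)%R.
Proof.
have -> : total_area (3 * N) = Wn (3 * N) 0.
  rewrite /total_area tuple_allb /Wn; apply: eq_bigl => s.
  by rewrite /is_ternary_path okrE /cnd /hend.
have [_ ->] := main_ind (3 * N) N 0 (esym (addn0 _)).
case: N hN => [//|M] _.
rewrite /Wf /= fsum /C2 (_ : ('C(1,2) = 0)%N) // mulr0 mul0r addr0.
rewrite mul0r addr0 mulr1 -natrM; congr (_%:R).
rewrite big_distrr /=; apply: eq_bigr => i _.
rewrite expnS mulnA; congr (_ * 'C(_, _)); lia.
Qed.
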